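(* Let $\phi:\mathbb{R}\to\mathbb{R}$ be differentiable, $f(z)=A\phi(Bz)$ with $A\in\mathbb{R}^{k_0\times k}$, $B\in\mathbb{R}^{k\times k_0}$, and let $x^{(1)},\dots,x^{(n)}\in\mathbb{R}^{k_0}$. Run gradient descent with learning rate $\gamma>0$ on $\mathcal{L}=\frac12\sum_{i=1}^n\|x^{(i)}-f(x^{(i)})\|_2^2$. If $A^{(0)}=\sum_{i=1}^n x^{(i)}{a_i^{(0)}}^T$ and $B^{(0)}=\sum_{i=1}^n b_i^{(0)}{x^{(i)}}^T$ for vectors $a_i^{(0)},b_i^{(0)}\in\mathbb{R}^k$, then for all time steps $t$ there exist vectors $a_i^{(t)},b_i^{(t)}\in\mathbb{R}^k$ with $A^{(t)}=\sum_{i=1}^n x^{(i)}{a_i^{(t)}}^T$ and $B^{(t)}=\sum_{i=1}^n b_i^{(t)}{x^{(i)}}^T$.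
   Context: $\phi$ is applied coordinatewise. Gradient descent updates $A\leftarrow A-\gamma\nabla_A\mathcal{L}$, $B\leftarrow B-\gamma\nabla_B\mathcal{L}$ simultaneously. *)

(* Defs.v *)
From HB Require Import structures.
From mathcomp Require Import all_boot all_order all_algebra.
From mathcomp Require Import all_classical all_reals all_analysis.
Set Implicit Arguments. Unset Strict Implicit. Unset Printing Implicit Defensive.
Import Order.TTheory GRing.Theory Num.Theory.
Local Open Scope ring_scope.

Section AE.
Variable R : realType.

Definition ae_f (phi : R -> R) (k0 k : nat)
  (A : 'M[R]_(k0, k)) (B : 'M[R]_(k, k0)) (z : 'cV[R]_k0) : 'cV[R]_k0 :=
  A *m map_mx phi (B *m z).

Definition sqnorm2 (m : nat) (v : 'cV[R]_m) : R := \sum_(r < m) (v r 0) ^+ 2.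

Definition ae_loss (phi : R -> R) (k0 k n : nat) (x : 'I_n -> 'cV[R]_k0)
  (A : 'M[R]_(k0, k)) (B : 'M[R]_(k, k0)) : R :=
  2^-1 * \sum_(i < n) sqnorm2 (x i - ae_f phi A B (x i)).

Definition grad_A (phi : R -> R) (k0 k n : nat) (x : 'I_n -> 'cV[R]_k0)
  (A : 'M[R]_(k0, k)) (B : 'M[R]_(k, k0)) : 'M[R]_(k0, k) :=
  \matrix_(p < k0, q < k)
     derive1 (fun s : R => ae_loss phi x (A + s *: delta_mx p q) B) 0.

Definition grad_B (phi : R -> R) (k0 k n : nat) (x : 'I_n -> 'cV[R]_k0)
  (A : 'M[R]_(k0, k)) (B : 'M[R]_(k, k0)) : 'M[R]_(k, k0) :=
  \matrix_(p < k, q < k0)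
     derive1 (fun s : R => ae_loss phi x A (B + s *: delta_mx p q)) 0.

Fixpoint gd (phi : R -> R) (k0 k n : nat) (x : 'I_n -> 'cV[R]_k0) (gamma : R)
  (A0 : 'M[R]_(k0, k)) (B0 : 'M[R]_(k, k0)) (t : nat)
  : 'M[R]_(k0, k) * 'M[R]_(k, k0) :=
  match t with
  | 0 => (A0, B0)
  | t'.+1 =>
      let AB := gd phi x gamma A0 B0 t' in
      (AB.1 - gamma *: grad_A phi x AB.1 AB.2,
       AB.2 - gamma *: grad_B phi x AB.1 AB.2)
  end.

End AE.

(* Main.v *)
Require Import Defs.
From HB Require Import structures.
From mathcomp Require Import all_boot all_order all_algebra.
From mathcomp Require Import all_classical all_reals all_analysis.
From mathcomp Require Import ring.
Import Order.TTheory GRing.Theory Num.Theory.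
Local Open Scope ring_scope.

Section H.
Variable R : realType.

Lemma loss_derive (n m : nat) (h : 'I_n -> 'I_m -> R -> R) (dh : 'I_n -> 'I_m -> R) :
  (forall i r, is_derive (0:R) (1:R) (h i r) (dh i r)) ->
  derive1 (fun s => 2^-1 * \sum_(i < n) \sum_(r < m) (h i r s)^+2) 0
  = \sum_(i < n) \sum_(r < m) h i r 0 * dh i r.
Proof.
move=> hd.
have -> : (fun s => 2^-1 * \sum_(i < n) \sum_(r < m) (h i r s)^+2) =
  (2^-1 : R) \*: \sum_(i < n) \sum_(r < m) (h i r)^+2.
  apply/funext => s /=; rewrite !fct_sumE; congr (_ * _).
  by apply: eq_bigr => i _; rewrite fct_sumE.
rewrite derive1E derive_val.
rewrite scaler_sumr; apply: eq_bigr => i _.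
rewrite scaler_sumr; apply: eq_bigr => r _.
have sc : forall a b : R, a *: b = a * b by [].
by rewrite !sc /= expr1 !mulrA mulVf ?mul1r // pnatr_eq0.
Qed.

Lemma is_derive_aff (phi : R -> R) (c d : R) :
  derivable phi c 1 ->
  is_derive (0:R) (1:R) (fun s => phi (c + s * d)) ('D_1 phi c * d).
Proof.
move=> hp.
have hg : is_derive (0:R) (1:R) (fun s : R => c + s * d) d.
  have -> : (fun s : R => c + s * d) = (cst c + ((@id R) * cst d)) by apply/funext.
  have H1 := @is_deriveM R R (@id R) (cst d) 0 1 1 0 (is_derive_id _ _) (is_derive_cst _ _ _).
  have H2 := @is_deriveD R R R (cst c) (@id R * cst d) 0 1 _ _ (is_derive_cst _ _ _) H1.
  move: H2; rewrite /= scaler0 !add0r; rewrite [X in is_derive _ _ _ X -> _]mulr1; exact.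
have hg' : derivable (fun s : R => c + s * d) 0 1 by case: hg.
have hp' : derivable phi ((fun s : R => c + s * d) 0) 1 by rewrite /= mul0r addr0.
apply: DeriveDef.
  apply/derivable1_diffP; apply: (@differentiable_comp _ _ _ _ (fun s : R => c + s * d) phi).
    exact/derivable1_diffP.
  exact/derivable1_diffP.
have := derive1_comp hg' hp'.
rewrite /comp !derive1E => ->.
by rewrite (@derive_val _ _ _ _ _ _ _ hg) /= mul0r addr0.
Qed.

Lemma is_derive_lin (c d : R) :
  is_derive (0:R) (1:R) (fun s : R => c + s * d) d.
Proof.
have -> : (fun s : R => c + s * d) = (cst c + ((@id R) * cst d)) by apply/funext.
have H1 := @is_deriveM R R (@id R) (cst d) 0 1 1 0 (is_derive_id _ _) (is_derive_cst _ _ _).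
have H2 := @is_deriveD R R R (cst c) (@id R * cst d) 0 1 _ _ (is_derive_cst _ _ _) H1.
move: H2; rewrite /= scaler0 !add0r; rewrite [X in is_derive _ _ _ X -> _]mulr1; exact.
Qed.

Lemma is_derive_lscale (f : R -> R) df k :
  is_derive (0:R) (1:R) f df -> is_derive (0:R) (1:R) (fun s => k * f s) (k * df).
Proof.
move=> H.
have -> : (fun s => k * f s) = k \*: f by apply/funext.
exact: is_deriveZ.
Qed.

Lemma is_derive_csub (f : R -> R) df c :
  is_derive (0:R) (1:R) f df -> is_derive (0:R) (1:R) (fun s => c - f s) (- df).
Proof.
move=> H.
have -> : (fun s => c - f s) = cst c - f by apply/funext.
have H2 := @is_deriveB R R R (cst c) f 0 1 _ _ (is_derive_cst _ _ _) H.
by move: H2; rewrite sub0r.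
Qed.

Lemma is_derive_lsum m (f : 'I_m -> R -> R) df :
  (forall j, is_derive (0:R) (1:R) (f j) (df j)) ->
  is_derive (0:R) (1:R) (fun s => \sum_(j < m) f j s) (\sum_(j < m) df j).
Proof.
move=> H.
have -> : (fun s => \sum_(j < m) f j s) = \sum_(j < m) f j by rewrite fct_sumE.
exact: is_derive_sum.
Qed.

Lemma sum_only (V : nmodType) m (p : 'I_m) (F : 'I_m -> V) :
  (forall r, r != p -> F r = 0) -> \sum_(r < m) F r = F p.
Proof. by move=> H; rewrite (bigD1 p) //= big1 ?addr0 // => j; apply: H. Qed.

Lemma delta_mul_entry k0 k1 (p : 'I_k0) (q : 'I_k1) (v : 'cV[R]_k1) (r : 'I_k0) :
  (delta_mx p q *m v) r 0 = (r == p)%:R * v q 0.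
Proof.
rewrite mxE (@sum_only _ _ q); first by rewrite mxE eqxx andbT.
by move=> j /negbTE hj; rewrite mxE hj andbF mul0r.
Qed.


Lemma gradA_eq (phi : R -> R) k0 k n (x : 'I_n -> 'cV[R]_k0) (A : 'M[R]_(k0,k)) B :
  grad_A phi x A B = - \sum_(i < n) (x i - ae_f phi A B (x i)) *m (map_mx phi (B *m x i))^T.
Proof.
apply/matrixP => p q; rewrite !mxE /ae_loss /sqnorm2.
have HD : forall i r, is_derive (0:R) (1:R) (fun s => (x i - ae_f phi (A + s *: delta_mx p q) B (x i)) r 0)
   (- ((r == p)%:R * (map_mx phi (B *m x i)) q 0)).
  move=> i r.
  have -> : (fun s => (x i - ae_f phi (A + s *: delta_mx p q) B (x i)) r 0) =
    (fun s => (x i - ae_f phi A B (x i)) r 0 + s * (- ((r == p)%:R * (map_mx phi (B *m x i)) q 0))).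
    apply/funext => s; rewrite /ae_f mulmxDl -scalemxAl opprD addrA [LHS]mxE.
    by congr (_ + _); rewrite 2!mxE delta_mul_entry mulrN.
  exact: is_derive_lin.
rewrite (@loss_derive _ _ _ _ HD).
rewrite summxE -sumrN; apply: eq_bigr => i _.
rewrite scale0r addr0 (@sum_only _ _ p).
  by rewrite !mxE big_ord1 !mxE eqxx mul1r mulrN.
by move=> r /negbTE ->; rewrite mul0r oppr0 mulr0.
Qed.


Lemma gradB_eq (phi : R -> R) (hphi : forall z : R, derivable phi z 1)
  k0 k n (x : 'I_n -> 'cV[R]_k0) (A : 'M[R]_(k0,k)) B :
  grad_B phi x A B = \sum_(i < n)
    (\col_(p < k) (- (\sum_(r < k0) (x i - ae_f phi A B (x i)) r 0 * A r p)
         * 'D_1 phi ((B *m x i) p 0))) *m (x i)^T.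
Proof.
apply/matrixP => p q; rewrite !mxE /ae_loss /sqnorm2.
have HD : forall i r, is_derive (0:R) (1:R)
   (fun s => (x i - ae_f phi A (B + s *: delta_mx p q) (x i)) r 0)
   (- \sum_(j < k) A r j * ('D_1 phi ((B *m x i) j 0) * ((j == p)%:R * x i q 0))).
  move=> i r.
  have -> : (fun s => (x i - ae_f phi A (B + s *: delta_mx p q) (x i)) r 0) =
    (fun s => x i r 0 - \sum_(j < k) A r j * phi ((B *m x i) j 0 + s * ((j == p)%:R * x i q 0))).
    apply/funext => s; rewrite /ae_f mulmxDl -scalemxAl.
    set v := B *m x i; set w := delta_mx p q *m x i.
    rewrite [LHS]mxE [X in _ + X]mxE [X in _ - X]mxE.
    congr (_ - _); apply: eq_bigr => j _.
    by rewrite !mxE -delta_mul_entry mxE.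
  apply: is_derive_csub.
  apply: (@is_derive_lsum _ (fun j s => A r j * phi ((B *m x i) j 0 + s * ((j == p)%:R * x i q 0)))).
  move=> j; apply: is_derive_lscale; exact: is_derive_aff.
rewrite (@loss_derive _ _ _ _ HD).
rewrite summxE; apply: eq_bigr => i _.
rewrite scale0r addr0 [RHS]mxE big_ord1 [X in X * _]mxE [X in _ * X]mxE.
rewrite !mulNr !mulr_suml -sumrN; apply: eq_bigr => r _.
rewrite (@sum_only _ _ p); last by move=> j /negbTE ->; rewrite mul0r !mulr0.
rewrite eqxx mul1r; ring.
Qed.


Section Span.
Variables (k0 k n : nat) (x : 'I_n -> 'cV[R]_k0).

Definition spanA (M : 'M[R]_(k0, k)) := exists a : 'I_n -> 'cV[R]_k, M = \sum_(i < n) x i *m (a i)^T.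
Definition inX (v : 'cV[R]_k0) := exists c : 'I_n -> R, v = \sum_(i < n) c i *: x i.

Lemma inX_x i : inX (x i).
Proof.
exists (fun j => (j == i)%:R); rewrite (@sum_only _ _ i) ?eqxx ?scale1r //.
by move=> j /negbTE ->; rewrite scale0r.
Qed.

Lemma inX_B u v : inX u -> inX v -> inX (u - v).
Proof.
move=> [c ->] [d ->]; exists (fun i => c i - d i).
by rewrite -sumrB; apply: eq_bigr => i _; rewrite scalerBl.
Qed.

Lemma spanA_mul M (w : 'cV[R]_k) : spanA M -> inX (M *m w).
Proof.
move=> [a ->]; exists (fun i => ((a i)^T *m w) 0 0).
rewrite mulmx_suml; apply: eq_bigr => i _.
by rewrite -mulmxA {1}[(a i)^T *m w]mx11_scalar mul_mx_scalar.
Qed.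

Lemma inX_outer v (u : 'cV[R]_k) : inX v -> spanA (v *m u^T).
Proof.
move=> [c ->]; exists (fun i => c i *: u).
rewrite mulmx_suml; apply: eq_bigr => i _.
by rewrite -scalemxAl scalemxAr; congr (_ *m _); apply/matrixP => ? ?; rewrite !mxE.
Qed.

Lemma spanA0 : spanA 0.
Proof. by exists (fun _ => 0); rewrite big1 // => i _; rewrite linear0 mulmx0. Qed.

Lemma spanAD M N : spanA M -> spanA N -> spanA (M + N).
Proof.
move=> [a ->] [b ->]; exists (fun i => a i + b i).
by rewrite -big_split; apply: eq_bigr => i _; rewrite linearD mulmxDr.
Qed.

Lemma spanAZ c M : spanA M -> spanA (c *: M).
Proof.
move=> [a ->]; exists (fun i => c *: a i).
by rewrite scaler_sumr; apply: eq_bigr => i _; rewrite linearZ scalemxAr.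
Qed.

Lemma spanA_sum (F : 'I_n -> 'M[R]_(k0, k)) : (forall i, spanA (F i)) -> spanA (\sum_(i < n) F i).
Proof.
move=> H; apply: (big_ind spanA) => //; [exact: spanA0 | exact: spanAD].
Qed.

End Span.

End H.

Theorem mainTheorem11 (R : realType) (phi : R -> R)
  (hphi : forall z : R, derivable phi z 1)
  (k0 k n : nat) (x : 'I_n -> 'cV[R]_k0) (gamma : R) (hgamma : 0 < gamma)
  (a0 b0 : 'I_n -> 'cV[R]_k) :
  let A0 := \sum_(i < n) x i *m (a0 i)^T in
  let B0 := \sum_(i < n) b0 i *m (x i)^T in
  forall t : nat,
    exists a b : 'I_n -> 'cV[R]_k,
      (gd phi x gamma A0 B0 t).1 = \sum_(i < n) x i *m (a i)^T /\
      (gd phi x gamma A0 B0 t).2 = \sum_(i < n) b i *m (x i)^T.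
Proof.
move=> A0 B0; elim=> [|t [a [b [HA HB]]]].
  by exists a0, b0.
rewrite /=.
set A := (gd phi x gamma A0 B0 t).1 in HA *.
set B := (gd phi x gamma A0 B0 t).2 in HB *.
have sA : spanA _ _ _ _ x A by exists a.
have : spanA _ _ _ _ x (A - gamma *: grad_A phi x A B).
  apply: spanAD => //; rewrite -scaleNr; apply: spanAZ.
  rewrite gradA_eq -scaleN1r; apply: spanAZ; apply: spanA_sum => i.
  apply: inX_outer; apply: inX_B; [exact: inX_x | exact: spanA_mul].
move=> [a' Ha']; exists a'.
exists (fun i => b i - gamma *: (\col_(p < k) (- (\sum_(r < k0) (x i - ae_f phi A B (x i)) r 0 * A r p)
         * 'D_1 phi ((B *m x i) p 0)))).
split => //.
rewrite (gradB_eq _ _ hphi) HB scaler_sumr -sumrB; apply: eq_bigr => i _.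
by rewrite mulmxBl scalemxAl.
Qed.
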